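(* Let $\{x^k\}$ be generated by the ABP algorithm described in the context and assume (A1)–(A6), (A7'), (A8): (A1) $\mathcal F$ is continuously differentiable; (A2) $C$, $Q$ nonempty closed convex, $z_i^*>-\infty$ for each $i$; (A3) each $f_i$ convex; (A4) $\Omega\ne\emptyset$; (A5) $\lambda_k>0$, $\sum\lambda_k=\infty$, $\sum\lambda_k^2<\infty$; (A6) $0<\underline\alpha\le\alpha_k\le\bar\alpha$, $0<\underline\beta\le\beta_k\le\bar\beta$, $0<\underline\gamma\le\gamma_k\le\bar\gamma$ for all $k$; (A7') $\sigma:=\varphi^*-\varphi_{\mathrm{lb}}\le\varepsilon_0$ for a known constant $\varepsilon_0\ge0$; (A8) $\sup_k\|x^k\|\le B<\infty$. Let $\bar M<\infty$ be a uniform bound $\|d^k\|\le\bar M$ for all $k$ (which exists under these assumptions), $\bar\eta:=\max(\mu,\bar M)$, $C_*:=\bar\alpha\bar\eta/\mu$ and $\Lambda_N:=\sum_{k=0}^N\lambda_k$. Then $$\limsup_{N\to\infty}\frac1{\Lambda_N}\sum_{k=0}^N\lambda_k\Phi_k\le C_*\varepsilon_0,\qquad\text{and in particular}\qquad\liminf_{k\to\infty}\Phi_k\le C_*\varepsilon_0.$$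
   Context: Let $n,m\ge1$, $\mathcal F=(f_1,\dots,f_m)\colon\mathbb R^n\to\mathbb R^m$, $C\subset\mathbb R^n$, $Q\subset\mathbb R^m$, $Q^+:=Q-\mathbb R^m_+=\{y-u:y\in Q,u\in\mathbb R^m_+\}$; $P_S$ is Euclidean projection onto a nonempty closed convex set $S$. Let $z_i^*:=\inf_{x\in C}f_i(x)$, fix $r$ with $r_i>0$, $\sum r_i=1$. Define $\varphi(x):=\max_ir_i(f_i(x)-z_i^* )$, $H(x):=\tfrac12\mathrm{dist}^2(x,C)$, $G(x):=\tfrac12\mathrm{dist}^2(\mathcal F(x),Q^+)$, $\mathcal S:=\{x:H(x)=0,G(x)=0\}$, $\varphi^*:=\inf_{\mathcal S}\varphi$, $\Omega:=\{x\in\mathcal S:\varphi(x)=\varphi^*\}$, $\varphi_{\mathrm{lb}}:=\inf_C\varphi$. ABP algorithm: given $x^0$, $\mu>0$, positive sequences $\{\alpha_k\},\{\beta_k\},\{\gamma_k\},\{\lambda_k\}$: $p^k:=P_{Q^+}(\mathcal F(x^k))$, $\rho^k:=\mathcal F(x^k)-p^k$, $z^k:=x^k-P_C(x^k)$, $v^k:=J_{\mathcal F}(x^k)^T\rho^k$, $w^k:=r_{i^*}\nabla f_{i^*}(x^k)$ with arbitrary $i^*\in\arg\max_ir_i(f_i(x^k)-z_i^* )$, $\Delta_k:=\varphi(x^k)-\varphi_{\mathrm{lb}}$, $d^k:=\alpha_k\mathbf 1_{\{\Delta_k\ge0\}}w^k+\beta_kz^k+\gamma_kv^k$, $\eta_k:=\max(\mu,\|d^k\|)$,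 $x^{k+1}:=x^k-(\lambda_k/\eta_k)d^k$. Notation: $H_k:=H(x^k)$, $G_k:=G(x^k)$, $\Delta_k^+:=\max(\Delta_k,0)$, $\Phi_k:=\alpha_k\Delta_k^++\beta_kH_k+\gamma_kG_k$. *)

(* Defs.v *)
From HB Require Import structures.
From mathcomp Require Import all_boot all_order all_algebra.
From mathcomp Require Import all_classical all_reals all_analysis.
Set Implicit Arguments. Unset Strict Implicit. Unset Printing Implicit Defensive.
Import Order.TTheory GRing.Theory Num.Theory.
Import numFieldNormedType.Exports.
Local Open Scope classical_set_scope.
Local Open Scope ring_scope.

Section ABPDefs.
Variable R : realType.

Definition dotv p (u v : 'rV[R]_p) : R := \sum_(j < p) u 0 j * v 0 j.
Definition enorm p (u : 'rV[R]_p) : R := Num.sqrt (dotv u u).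

Definition edist p (S : set 'rV[R]_p) (x : 'rV[R]_p) : R :=
  inf [set enorm (x - y) | y in S].

Definition is_proj p (S : set 'rV[R]_p) (P : 'rV[R]_p -> 'rV[R]_p) : Prop :=
  forall x, S (P x) /\ forall y, S y -> enorm (x - P x) <= enorm (x - y).

Definition closed_convex p (S : set 'rV[R]_p) : Prop :=
  closed S /\ forall x y (t : R), S x -> S y -> 0 <= t <= 1 ->
    S (t *: x + (1 - t) *: y).

Definition convex_fun p (g : 'rV[R]_p -> R) : Prop :=
  forall x y (t : R), 0 <= t <= 1 ->
    g (t *: x + (1 - t) *: y) <= t * g x + (1 - t) * g y.

Definition nonneg_orthant m : set 'rV[R]_m := [set u | forall i, 0 <= u 0 i].

Definition Qplus m (Q : set 'rV[R]_m) : set 'rV[R]_m :=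
  [set z | exists y u, Q y /\ @nonneg_orthant m u /\ z = y - u].

Variables (n m : nat).
Implicit Types (f : 'I_m -> 'rV[R]_n -> R) (C : set 'rV[R]_n) (Q : set 'rV[R]_m).

Definition Fvec f (x : 'rV[R]_n) : 'rV[R]_m := \row_i f i x.

Definition Hfun C (x : 'rV[R]_n) : R := 2^-1 * edist C x ^+ 2.
Definition Gfun f Q (x : 'rV[R]_n) : R := 2^-1 * edist (Qplus Q) (Fvec f x) ^+ 2.

Definition zstar f C (i : 'I_m) : R := inf [set f i x | x in C].

Definition phi f C (r : 'I_m -> R) (x : 'rV[R]_n) : R :=
  sup [set r i * (f i x - zstar f C i) | i in [set: 'I_m]].

Definition feasible f C Q : set 'rV[R]_n := [set x | Hfun C x = 0 /\ Gfun f Q x = 0].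
Definition phistar f C Q r : R := inf [set phi f C r x | x in feasible f C Q].
Definition Omega f C Q r : set 'rV[R]_n :=
  [set x | feasible f C Q x /\ phi f C r x = phistar f C Q r].
Definition phi_lb f C r : R := inf [set phi f C r x | x in C].

Definition grad (g : 'rV[R]_n -> R) (x : 'rV[R]_n) : 'rV[R]_n :=
  \row_j derive g x (delta_mx 0 j : 'rV[R]_n).

Definition jacT f (x : 'rV[R]_n) (rho : 'rV[R]_m) : 'rV[R]_n :=
  \sum_(i < m) rho 0 i *: grad (f i) x.

Definition abp_dir f C (r : 'I_m -> R) (PC : 'rV[R]_n -> 'rV[R]_n)
  (PQ : 'rV[R]_m -> 'rV[R]_m) (istar : 'I_m) (a b c : R) (xk : 'rV[R]_n) : 'rV[R]_n :=
  let rho := Fvec f xk - PQ (Fvec f xk) in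
  let z := xk - PC xk in
  let v := jacT f xk rho in
  let w := r istar *: grad (f istar) xk in
  let Delta := phi f C r xk - phi_lb f C r in
  ((if 0 <= Delta then a else 0) *: w) + b *: z + c *: v.

Definition abp_Phi f C Q (r : 'I_m -> R) (a b c : R) (xk : 'rV[R]_n) : R :=
  a * Num.max (phi f C r xk - phi_lb f C r) 0 + b * Hfun C xk + c * Gfun f Q xk.

End ABPDefs.

(* Main.v *)
Require Import Defs.
From HB Require Import structures.
From mathcomp Require Import all_boot all_order all_algebra.
From mathcomp Require Import all_classical all_reals all_analysis.
From mathcomp Require Import ring lra.
Import Order.TTheory GRing.Theory Num.Theory.
Import numFieldNormedType.Exports.
Local Open Scope classical_set_scope.
Local Open Scope ring_scope.

Section Aux.
Context {R : realType} {p : nat}.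
Implicit Types u v w : 'rV[R]_p.

Lemma dotvC u v : dotv u v = dotv v u.
Proof. by apply: eq_bigr => j _; rewrite mulrC. Qed.
Lemma dotvDl u v w : dotv (u + v) w = dotv u w + dotv v w.
Proof. by rewrite /dotv -big_split; apply: eq_bigr => j _; rewrite !mxE mulrDl. Qed.
Lemma dotvDr u v w : dotv w (u + v) = dotv w u + dotv w v.
Proof. by rewrite dotvC dotvDl !(dotvC w). Qed.
Lemma dotvZl (a : R) u v : dotv (a *: u) v = a * dotv u v.
Proof. by rewrite /dotv mulr_sumr; apply: eq_bigr => j _; rewrite !mxE mulrA. Qed.
Lemma dotvZr (a : R) u v : dotv u (a *: v) = a * dotv u v.
Proof. by rewrite dotvC dotvZl dotvC. Qed.
Lemma dotvNl u v : dotv (- u) v = - dotv u v.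
Proof. by rewrite -scaleN1r dotvZl mulN1r. Qed.
Lemma dotvNr u v : dotv u (- v) = - dotv u v.
Proof. by rewrite dotvC dotvNl dotvC. Qed.
Lemma dotvBl u v w : dotv (u - v) w = dotv u w - dotv v w.
Proof. by rewrite dotvDl dotvNl. Qed.
Lemma dotvBr u v w : dotv w (u - v) = dotv w u - dotv w v.
Proof. by rewrite dotvDr dotvNr. Qed.
Lemma dotv_ge0 u : 0 <= dotv u u.
Proof. by apply: sumr_ge0 => j _; rewrite -expr2 sqr_ge0. Qed.
Lemma enorm_sq u : enorm u ^+ 2 = dotv u u.
Proof. by rewrite /enorm sqr_sqrtr // dotv_ge0. Qed.
Lemma enorm_ge0 u : 0 <= enorm u.
Proof. exact: sqrtr_ge0. Qed.
Lemma enorm_le_sq u v : enorm u <= enorm v -> dotv u u <= dotv v v.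
Proof. by rewrite /enorm ler_sqrt // dotv_ge0. Qed.

Lemma dotv_expand u v (t : R) :
  dotv (u - t *: v) (u - t *: v) = dotv u u - 2 * t * dotv u v + t ^+ 2 * dotv v v.
Proof. rewrite dotvBl !dotvBr !dotvZl !dotvZr (dotvC v u); ring. Qed.

Lemma edist_proj (S : set 'rV[R]_p) P x : is_proj S P ->
  Defs.edist S x = enorm (x - P x).
Proof.
move=> hP; have [SP Pm] := hP x.
apply/eqP; rewrite eq_le; apply/andP; split.
  apply: ge_inf; last by exists (P x).
  by exists 0 => _ [y _ <-]; apply: enorm_ge0.
apply: lb_le_inf; first by exists (enorm (x - P x)), (P x).
by move=> _ [y Sy <-]; apply: Pm.
Qed.

Lemma proj_VI (S : set 'rV[R]_p) P x y : is_proj S P ->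
  (forall a b (t : R), S a -> S b -> 0 <= t <= 1 -> S (t *: a + (1 - t) *: b)) ->
  S y -> dotv (x - P x) (y - P x) <= 0.
Proof.
move=> hP cS Sy; have [SP Pm] := hP x.
set a := x - P x; set b := y - P x.
have key t : 0 < t <= 1 -> 2 * t * dotv a b <= t ^+ 2 * dotv b b.
  move=> /andP[t0 t1].
  have Sz := cS _ _ t Sy SP (introT andP (conj (ltW t0) t1)).
  have := enorm_le_sq _ _ (Pm _ Sz).
  have -> : x - (t *: y + (1 - t) *: P x) = a - t *: b.
    by rewrite /a /b scalerBr scalerBl scale1r; apply/rowP => j; rewrite !mxE; ring.
  rewrite dotv_expand -/a; move=> h; nra.
rewrite leNgt; apply/negP => ab0.
have bb0 := dotv_ge0 b.
have t0 : 0 < dotv a b / (dotv b b + dotv a b) by apply: divr_gt0 => //; lra.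
have t1 : dotv a b / (dotv b b + dotv a b) <= 1 by rewrite ler_pdivrMr; lra.
have := key _ (andb_true_intro (conj t0 t1)).
set t := _ / _ => h.
have ht : t * (dotv b b + dotv a b) = dotv a b by rewrite /t mulfVK //; lra.
have h3 : t * (t * (dotv b b + dotv a b)) = t * dotv a b by rewrite ht.
have h4 : 0 < t * dotv a b by apply: mulr_gt0.
have h5 : 0 < t * (t * dotv a b) by apply: mulr_gt0.
nra.
Qed.

End Aux.

Section Aux2.
Context {R : realType} {n : nat}.

Lemma grad_dot (g : 'rV[R]_n -> R) x h : differentiable g x ->
  dotv (grad g x) h = 'd g x h.
Proof.
move=> dg; rewrite {2}(row_sum_delta h) linear_sum /dotv; apply: eq_bigr => j _.
by rewrite mxE deriveE // linearZ /= mulrC.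
Qed.

Lemma convex_grad (g : 'rV[R]_n -> R) x y : differentiable g x -> convex_fun g ->
  dotv (grad g x) (y - x) <= g y - g x.
Proof.
move=> dg cg; rewrite grad_dot // -deriveE //.
have := @diff_derivable _ _ _ _ _ (y - x) dg; rewrite /derivable /derive => cv.
set F := (fun h : R => _).
have cvr : F @ at_right 0 --> lim (F @ 0^').
  move=> A /cv /nbhs_ballP [_ /posnumP[e] xe_A].
  by exists e%:num => //= z xe_z /gt_eqF/negbT/xe_A; exact.
rewrite -(cvg_lim _ cvr) //.
apply: limr_le; first by apply/cvg_ex; eexists; exact: cvr.
near=> t.
have t0 : 0 < t by near: t; exact: nbhs_right_gt.
have t1 : t < 1 by near: t; exact: nbhs_right_lt.
rewrite /F /=.
have := cg y x t (introT andP (conj (ltW t0) (ltW t1))).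
have -> : t *: y + (1 - t) *: x = t *: (y - x) + x.
  by apply/rowP => j; rewrite !mxE; ring.
move=> h.
have -> : forall a : R, t^-1 *: a = a / t by move=> a; rewrite mulrC.
rewrite ler_pdivrMr //; nra.
Unshelve. all: by end_near. Qed.
End Aux2.

Section Asym.
Context {R : realType}.

Lemma Lam_mono (lam : nat -> R) : (forall k, 0 < lam k) ->
  forall N M, (N <= M)%N -> \sum_(0 <= k < N) lam k <= \sum_(0 <= k < M) lam k.
Proof.
move=> l0 N M NM.
have := @nondecreasing_series R lam xpredT 0 (fun n _ _ => ltW (l0 n)) N M NM.
by rewrite /=.
Qed.

Lemma Lam_unbounded (lam : nat -> R) : (forall k, 0 < lam k) ->
  ~ cvgn (series lam) -> forall M, exists N, M < \sum_(0 <= k < N) lam k.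
Proof.
move=> l0 ncv M; apply/not_existsP => h; apply: ncv.
apply: nondecreasing_is_cvgn.
  by move=> a b ab; apply: Lam_mono.
exists M => _ [N _ <-]; have := h N; rewrite /series /=.
by rewrite real_ltNge ?num_real //; move/negP; rewrite negbK.
Qed.

Lemma asympt (lam Phi : nat -> R) K c : (forall k, 0 < lam k) ->
  ~ cvgn (series lam) -> (forall k, 0 <= Phi k) -> 0 <= c ->
  (forall N, \sum_(0 <= k < N.+1) lam k * Phi k <= K + c * \sum_(0 <= k < N.+1) lam k) ->
  (limn_esup (fun N => ((\sum_(0 <= k < N.+1) lam k * Phi k) /
                       (\sum_(0 <= k < N.+1) lam k))%:E) <= c%:E)%E
  /\ (limn_einf (fun k => (Phi k)%:E) <= c%:E)%E.
Proof.
move=> l0 ncv P0 c0 hS.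
have Lpos N : 0 < \sum_(0 <= k < N.+1) lam k.
  by rewrite big_nat_recr //=; apply: ltr_wpDl => //; apply: sumr_ge0 => k _; exact: ltW.
have unb := @Lam_unbounded lam l0 ncv.
split.
  apply/lee_addgt0Pr => e e0.
  have [N0 hN0] := unb (`|K| / e).
  rewrite limn_esup_lim.
  set u := (fun N => _).
  rewrite (cvg_lim _ (@cvg_esups_inf R u)) //.
  apply: (@le_trans _ _ (esups u N0)).
    by apply: ereal_inf_lbound; exists N0.
  apply: ge_ereal_sup => _ [N /= N0N <-].
  rewrite -EFinD lee_fin ler_pdivrMr //.
  have hm := @Lam_mono lam l0 _ _ (leqW N0N).
  have := hS N.
  set L := \sum_(0 <= k < N.+1) lam k.
  set S := \sum_(0 <= k < N.+1) lam k * Phi k.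
  move=> hSN.
  have : `|K| < e * L.
    by rewrite -ltr_pdivrMl //; rewrite mulrC; apply: (lt_le_trans hN0).
  have := ler_norm K.
  nra.
apply/lee_addgt0Pr => e e0.
rewrite limn_einf_lim.
set v := (fun k => _).
rewrite (cvg_lim _ (@cvg_einfs_sup R v)) //.
apply: ge_ereal_sup => _ [n _ <-].
have [k [nk Pk]] : exists k, (n <= k)%N /\ Phi k <= c + e.
  apply/not_existsP => h.
  set P' := \sum_(0 <= k < n) lam k * (Phi k - (c + e)).
  have [N hN] := unb ((`|K| + `|P'|) / e).
  pose N' := maxn N n.
  have hm := @Lam_mono lam l0 N N'.+1 (leqW (leq_maxl N n)).
  have hsplit : \sum_(0 <= k < N'.+1) lam k * (Phi k - (c + e)) >= P'.
    rewrite (@big_cat_nat _ _ _ n) //=; last by apply: leqW; apply: leq_maxr.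
    rewrite lerDl big_nat_cond; apply: sumr_ge0 => k /andP[/andP[nk _] _]; apply: mulr_ge0; first exact: ltW.
    rewrite subr_ge0; apply: ltW; rewrite ltNge; apply/negP => hk; exact: (h k).
  have hS' := hS N'.
  have hE : \sum_(0 <= k < N'.+1) lam k * (Phi k - (c + e)) =
     \sum_(0 <= k < N'.+1) lam k * Phi k - (c + e) * \sum_(0 <= k < N'.+1) lam k.
    rewrite mulr_sumr -sumrB; apply: eq_bigr => k _; ring.
  move: hsplit hS' hm; rewrite hE.
  set L := \sum_(0 <= k < N'.+1) lam k.
  set S := \sum_(0 <= k < N'.+1) lam k * Phi k.
  move=> h1 h2 h3.
  have : `|K| + `|P'| < e * L.
    by rewrite -ltr_pdivrMl // mulrC; apply: (lt_le_trans hN).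
  have := ler_norm K; have : - P' <= `|P'| by rewrite -normrN ler_norm.
  nra.
apply: (@le_trans _ _ (v k)); first by apply: ereal_inf_lbound; exists k.
by rewrite /v -EFinD lee_fin.
Qed.
End Asym.

Section Aux4.
Context {R : realType} {p : nat}.
Implicit Types u v w : 'rV[R]_p.

Lemma enorm_eq0 u : enorm u = 0 -> u = 0.
Proof.
move=> /eqP; rewrite /enorm sqrtr_eq0 => h.
have h0 : dotv u u = 0 by apply/eqP; rewrite eq_le h dotv_ge0.
apply/rowP => j; rewrite mxE.
have hj : u 0 j * u 0 j = 0.
  apply: (@psumr_eq0P _ _ xpredT (fun j => u 0 j * u 0 j) _ h0 j isT).
  by move=> i _; rewrite -expr2 sqr_ge0.
by move: hj => /eqP; rewrite mulf_eq0 orbb => /eqP.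
Qed.

Lemma proj_mem (S : set 'rV[R]_p) P y : is_proj S P ->
  2^-1 * Defs.edist S y ^+ 2 = 0 -> S y.
Proof.
move=> hP; rewrite (edist_proj _ _ _ hP) => /eqP; rewrite mulf_eq0 invr_eq0 pnatr_eq0 /=.
rewrite expf_eq0 /= => /eqP /enorm_eq0 /eqP; rewrite subr_eq0 => /eqP ->.
by have [] := hP y.
Qed.

Lemma dotv_suml (I : finType) (F : I -> 'rV[R]_p) w :
  dotv (\sum_i F i) w = \sum_i dotv (F i) w.
Proof.
apply: (big_ind2 (fun a b => dotv a w = b)).
- by rewrite /dotv big1 // => j _; rewrite mxE mul0r.
- by move=> a1 b1 a2 b2 <- <-; rewrite dotvDl.
- by [].
Qed.

Lemma dotv_delta u (i : 'I_p) : dotv u (delta_mx 0 i) = u 0 i.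
Proof.
rewrite /dotv (bigD1 i) //= big1 => [|j ji]; first by rewrite mxE !eqxx mulr1 addr0.
by rewrite mxE eqxx (negbTE ji) mulr0.
Qed.

End Aux4.

Section Key.
Context {R : realType} {n m : nat}.
Implicit Types (f : 'I_m -> 'rV[R]_n -> R) (C : set 'rV[R]_n) (Q : set 'rV[R]_m).

Lemma Qplus_convex Q : closed_convex Q ->
  forall a b (t : R), Qplus Q a -> Qplus Q b -> 0 <= t <= 1 ->
    Qplus Q (t *: a + (1 - t) *: b).
Proof.
move=> [_ cQ] a b t [qa [ua [Qa [ua0 ->]]]] [qb [ub [Qb [ub0 ->]]]] t01.
have /andP[t0 t1] := t01.
exists (t *: qa + (1 - t) *: qb), (t *: ua + (1 - t) *: ub); split; first exact: cQ.
split; last by apply/rowP => j; rewrite !mxE; ring.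
move=> j; have := ua0 j; have := ub0 j; rewrite !mxE; nra.
Qed.

Lemma rho_ge0 Q PQ (y : 'rV[R]_m) : closed_convex Q -> is_proj (Qplus Q) PQ ->
  forall i, 0 <= (y - PQ y) 0 i.
Proof.
move=> cQ hP i; rewrite leNgt; apply/negP => hneg.
set rho := y - PQ y in hneg.
have key : forall ri : R, ri < 0 -> Qplus Q (PQ y + ri *: delta_mx 0 i).
  move=> ri hri.
  have [[q [u [Qq [u0 Pe]]]] _] := hP y.
  exists q, (u - ri *: delta_mx 0 i); split => //; split.
    move=> j; rewrite !mxE; have := u0 j.
    have : 0 <= ((0 == 0 :> 'I_1) && (j == i))%:R :> R by [].
    move: (((0 == 0 :> 'I_1) && (j == i))%:R) => dd hd hu. nra.
  by rewrite Pe; apply/rowP => j; rewrite !mxE; ring.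
have mem := key _ hneg.
have := proj_VI _ _ y _ hP (Qplus_convex _ cQ) mem.
rewrite [PQ y + _]addrC addrK dotvZr dotv_delta -/rho => h.
nra.
Qed.

Lemma phi_le f C r xk i0 :
  (forall i, r i * (f i xk - zstar f C i) <= r i0 * (f i0 xk - zstar f C i0)) ->
  Defs.phi f C r xk <= r i0 * (f i0 xk - zstar f C i0).
Proof.
move=> h; apply: ge_sup; first by exists (r i0 * (f i0 xk - zstar f C i0)), i0.
by move=> _ [i _ <-]; exact: h.
Qed.

Lemma phi_ge f C r y i0 : r i0 * (f i0 y - zstar f C i0) <= Defs.phi f C r y.
Proof.
apply: ub_le_sup; last by exists i0.
exists (\sum_i `|r i * (f i y - zstar f C i)|) => _ [i _ <-].
apply: le_trans (ler_norm _) _.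
rewrite (bigD1 i) //=; apply: ler_wpDr => //; exact: sumr_ge0.
Qed.

End Key.

Section Key2.
Context {R : realType} {n m : nat}.
Implicit Types (f : 'I_m -> 'rV[R]_n -> R) (C : set 'rV[R]_n) (Q : set 'rV[R]_m).

Lemma key_ineq f C Q r PC PQ i0 (a b c : R) xk xs :
  (forall i, 0 < r i) -> (forall i y, differentiable (f i) y) ->
  (forall i, convex_fun (f i)) ->
  closed_convex C -> closed_convex Q -> is_proj C PC -> is_proj (Qplus Q) PQ ->
  C xs -> Qplus Q (Fvec f xs) ->
  (forall i, r i * (f i xk - zstar f C i) <= r i0 * (f i0 xk - zstar f C i0)) ->
  0 < a -> 0 < b -> 0 < c ->
  abp_Phi f C Q r a b c xk
   - (if 0 <= Defs.phi f C r xk - phi_lb f C r then a else 0)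
     * (Defs.phi f C r xs - phi_lb f C r)
   <= dotv (abp_dir f C r PC PQ i0 a b c xk) (xk - xs).
Proof.
move=> r0 df cf cC cQ hPC hPQ Cxs Qxs hmax a0 b0 c0.
set rho := Fvec f xk - PQ (Fvec f xk).
set z := xk - PC xk.
have hZ : dotv z z <= dotv z (xk - xs).
  have vi := proj_VI _ _ xk _ hPC cC.2 Cxs.
  have -> : xk - xs = z - (xs - PC xk) by rewrite /z; apply/rowP => j; rewrite !mxE; ring.
  rewrite dotvBr -/z; lra.
have hH : Hfun C xk = 2^-1 * dotv z z.
  by rewrite /Hfun (edist_proj _ _ _ hPC) enorm_sq.
have hG : Gfun f Q xk = 2^-1 * dotv rho rho.
  by rewrite /Gfun (edist_proj _ _ _ hPQ) enorm_sq.
have hV : dotv rho rho <= dotv (jacT f xk rho) (xk - xs).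
  rewrite /jacT dotv_suml.
  apply: (@le_trans _ _ (dotv rho (Fvec f xk - Fvec f xs))).
    have vi := proj_VI _ _ (Fvec f xk) _ hPQ (Qplus_convex _ cQ) Qxs.
    have -> : Fvec f xk - Fvec f xs = rho - (Fvec f xs - PQ (Fvec f xk)).
      by rewrite /rho; apply/rowP => j; rewrite !mxE; ring.
    rewrite dotvBr -/rho; lra.
  rewrite {1}/dotv; apply: ler_sum => i _; rewrite dotvZl.
  have hr := rho_ge0 _ _ (Fvec f xk) cQ hPQ i.
  apply: ler_wpM2l; first exact: hr.
  rewrite !mxE.
  have := convex_grad (f i) xk xs (df i xk) (cf i).
  by rewrite -[xk - xs]opprB dotvNr; lra.
have hW : Defs.phi f C r xk - Defs.phi f C r xs
           <= dotv (r i0 *: grad (f i0) xk) (xk - xs).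
  rewrite dotvZl.
  have h1 := phi_le f C r xk i0 hmax.
  have h2 := phi_ge f C r xs i0.
  have h3 := convex_grad (f i0) xk xs (df i0 xk) (cf i0).
  have h4 : r i0 * (f i0 xk - f i0 xs) <= r i0 * dotv (grad (f i0) xk) (xk - xs).
    by apply: ler_wpM2l; [exact: ltW | rewrite -[xk - xs]opprB dotvNr; lra].
  lra.
rewrite /abp_dir /= dotvDl dotvDl !dotvZl /abp_Phi hH hG -/rho -/z.
have hZ' := ler_wpM2l (ltW b0) hZ.
have hV' := ler_wpM2l (ltW c0) hV.
have hz0 := dotv_ge0 z; have hr0 := dotv_ge0 rho.
have hz1 : 0 <= b * dotv z z by apply: mulr_ge0 => //; exact: ltW.
have hr1 : 0 <= c * dotv rho rho by apply: mulr_ge0 => //; exact: ltW.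
case: ifP => hD.
  have hm : Num.max (Defs.phi f C r xk - phi_lb f C r) 0 = Defs.phi f C r xk - phi_lb f C r.
    by apply/max_idPl.
  rewrite hm.
  have hW' := ler_wpM2l (ltW a0) hW.
  rewrite dotvZl in hW'.
  lra.
have hm : Num.max (Defs.phi f C r xk - phi_lb f C r) 0 = 0.
  by apply/max_idPr; rewrite ltW // ltNge hD.
rewrite hm; lra.
Qed.

End Key2.
Theorem lemma17 (R : realType) (n m : nat)
  (f : 'I_m -> 'rV[R]_n -> R) (C : set 'rV[R]_n) (Q : set 'rV[R]_m)
  (r : 'I_m -> R)
  (PC : 'rV[R]_n -> 'rV[R]_n) (PQ : 'rV[R]_m -> 'rV[R]_m)
  (x : nat -> 'rV[R]_n) (mu : R)
  (alpha beta gamma lambda : nat -> R) (istar : nat -> 'I_m)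
  (alo ahi blo bhi glo ghi eps0 B Mbar : R) :
  (0 < n)%N -> (0 < m)%N ->
  (forall i, 0 < r i) -> \sum_(i < m) r i = 1 ->
  0 < mu ->
  (* (A1) F continuously differentiable *)
  (forall i y, differentiable (f i) y) ->
  (forall i (j : 'I_n), continuous (fun y => derive (f i) y (delta_mx 0 j : 'rV[R]_n))) ->
  (* (A2) *)
  C !=set0 -> closed_convex C -> Q !=set0 -> closed_convex Q ->
  (forall i, has_lbound [set f i y | y in C]) ->
  (* (A3) *)
  (forall i, convex_fun (f i)) ->
  (* (A4) *)
  Omega f C Q r !=set0 ->
  (* (A5) *)
  (forall k, 0 < lambda k) ->
  ~ cvgn (series lambda) ->
  cvgn (series (fun k => lambda k ^+ 2)) ->
  (* (A6) *)
  0 < alo -> 0 < blo -> 0 < glo ->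
  (forall k, alo <= alpha k <= ahi) ->
  (forall k, blo <= beta k <= bhi) ->
  (forall k, glo <= gamma k <= ghi) ->
  (* (A7') *)
  0 <= eps0 -> phistar f C Q r - phi_lb f C r <= eps0 ->
  (* (A8) *)
  (forall k, enorm (x k) <= B) ->
  (* the ABP iteration *)
  is_proj C PC -> is_proj (Qplus Q) PQ ->
  (forall k i, r i * (f i (x k) - zstar f C i) <=
     r (istar k) * (f (istar k) (x k) - zstar f C (istar k))) ->
  (forall k, x k.+1 = x k - (lambda k /
       Num.max mu (enorm (abp_dir f C r PC PQ (istar k) (alpha k) (beta k) (gamma k) (x k))))
       *: abp_dir f C r PC PQ (istar k) (alpha k) (beta k) (gamma k) (x k)) ->
  (* uniform bound on the directions *)
  (forall k, enorm (abp_dir f C r PC PQ (istar k) (alpha k) (beta k) (gamma k) (x k)) <= Mbar) ->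
  let Cst := ahi * Num.max mu Mbar / mu in
  let Phi := fun k => abp_Phi f C Q r (alpha k) (beta k) (gamma k) (x k) in
  (limn_esup (fun N => ((\sum_(0 <= k < N.+1) lambda k * Phi k) /
                       (\sum_(0 <= k < N.+1) lambda k))%:E)
    <= (Cst * eps0)%:E)%E
  /\ (limn_einf (fun k => (Phi k)%:E) <= (Cst * eps0)%:E)%E.
Proof.
  move=> n0 m0 r0 rsum mu0 df dcont neC cC neQ cQ lbd cf [xs [[Hxs Gxs] phixs]]
    l0 ncv cv2 alo0 blo0 glo0 ha hb hc heps0 hsig hB hPC hPQ hmax hiter hM Cst Phi.
  have Cxs : C xs := proj_mem _ _ _ hPC Hxs.
  have Qxs : Qplus Q (Fvec f xs) := proj_mem _ _ _ hPQ Gxs.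
  set d := fun k => abp_dir f C r PC PQ (istar k) (alpha k) (beta k) (gamma k) (x k).
  set etab := Num.max mu Mbar.
  set c := Cst * eps0.
  set D := fun k => dotv (x k - xs) (x k - xs).
  have etab0 : mu <= etab by rewrite /etab le_max lexx.
  have ahi0 : 0 < ahi by have := ha 0%N; move=> /andP[h1 h2]; lra.
  have c0 : 0 <= c.
    rewrite /c /Cst -/etab; apply: mulr_ge0 => //; apply: divr_ge0; last exact: ltW.
    apply: mulr_ge0; [exact: ltW | lra].
  have Phi0 k : 0 <= Phi k.
    rewrite /Phi /abp_Phi.
    have := ha k; have := hb k; have := hc k => /andP[? ?] /andP[? ?] /andP[? ?].
    have h1 : 0 <= Num.max (Defs.phi f C r (x k) - phi_lb f C r) 0 by rewrite le_max lexx orbT.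
    have h2 : 0 <= Hfun C (x k) by rewrite /Hfun; apply: mulr_ge0 => //; exact: sqr_ge0.
    have h3 : 0 <= Gfun f Q (x k) by rewrite /Gfun; apply: mulr_ge0 => //; exact: sqr_ge0.
    apply: addr_ge0; first apply: addr_ge0; apply: mulr_ge0 => //; lra.
  have step k : lambda k * Phi k <=
      etab / 2 * D k - etab / 2 * D k.+1 + (etab / 2 * lambda k ^+ 2 + c * lambda k).
    have := ha k; have := hb k; have := hc k => /andP[? ?] /andP[? ?] /andP[? ?].
    have hk := key_ineq f C Q r PC PQ (istar k) (alpha k) (beta k) (gamma k) (x k) xs
      r0 df cf cC cQ hPC hPQ Cxs Qxs (hmax k) ltac:(lra) ltac:(lra) ltac:(lra).
    rewrite -/(d k) phixs in hk.
    rewrite -/(Phi k) in hk.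
    set eta := Num.max mu (enorm (d k)).
    have eta0 : mu <= eta by rewrite /eta le_max lexx.
    have etae : enorm (d k) <= eta by rewrite /eta le_max lexx orbT.
    have etaM : eta <= etab.
      rewrite /eta /etab ge_max; apply/andP; split; rewrite le_max ?lexx //.
      by rewrite hM orbT.
    set s := lambda k / eta.
    have s0 : 0 <= s by apply: divr_ge0; [exact: ltW | lra].
    have seta : s * eta = lambda k by rewrite /s mulfVK //; apply/eqP => h; lra.
    have hx : x k.+1 - xs = (x k - xs) - s *: d k.
      by rewrite hiter -/(d k) -/eta -/s; apply/rowP => j; rewrite !mxE; ring.
    have sle : s <= lambda k / mu.
      by rewrite /s; apply: ler_wpM2l; [exact: ltW | rewrite lef_pV2 ?posrE //; lra].
    clearbody s.
    have hD : D k.+1 = D k - 2 * s * dotv (d k) (x k - xs) + s ^+ 2 * dotv (d k) (d k).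
      by rewrite /D hx dotv_expand dotvC.
    rewrite hD.
    set g := dotv (d k) (x k - xs) in hk *.
    set dd := dotv (d k) (d k).
    have dd0 : dd <= eta ^+ 2.
      rewrite /dd -enorm_sq; have := enorm_ge0 (d k); nra.
    have A2 : s ^+ 2 * dd <= lambda k ^+ 2.
      rewrite -seta exprMn; exact: (ler_wpM2l (exprn_ge0 2 s0) dd0).
    have A2' : etab * (s ^+ 2 * dd) <= etab * lambda k ^+ 2.
      by apply: ler_wpM2l => //; lra.
    set T := (if _ then _ else _) * _ in hk.
    have A1 : etab * s * (Phi k - T) <= etab * s * g.
      by apply: ler_wpM2l => //; apply: mulr_ge0 => //; lra.
    have A3 : lambda k * Phi k <= etab * s * Phi k.
      rewrite -seta; have := mulr_ge0 s0 (Phi0 k); nra.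
    have A4 : etab * s * T <= c * lambda k.
      rewrite /T; case: ifP => _; last by rewrite mul0r mulr0; apply: mulr_ge0 => //; exact: ltW.
      set sig := phistar f C Q r - phi_lb f C r in hsig *.
      have [sig0|sig0] := lerP sig 0.
        have : alpha k * sig <= 0 by nra.
        have : 0 <= etab * s by apply: mulr_ge0 => //; lra.
        have : 0 <= c * lambda k by apply: mulr_ge0 => //; exact: ltW.
        nra.
      have hs1 : etab * s * (alpha k * sig) <= etab * (lambda k / mu) * (ahi * eps0).
        apply: ler_pM; first (apply: mulr_ge0; [lra|exact: s0]).
        - apply: mulr_ge0; [lra | exact: ltW].
        - by apply: ler_wpM2l; lra.
        by apply: ler_pM; lra.
      apply: (le_trans hs1); rewrite /c /Cst -/etab.
      rewrite le_eqVlt; apply/orP; left; apply/eqP; field; apply/eqP => h; lra.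
    lra.
  have tele N : \sum_(0 <= k < N) lambda k * Phi k <=
      etab / 2 * D 0%N - etab / 2 * D N +
      \sum_(0 <= k < N) (etab / 2 * lambda k ^+ 2 + c * lambda k).
    elim: N => [|N IH]; first by rewrite !big_geq //; lra.
    rewrite !big_nat_recr //=; have := step N; lra.
  set L2 := limn (series (fun k => lambda k ^+ 2)).
  have hL2 N : \sum_(0 <= k < N) lambda k ^+ 2 <= L2.
    have := @nondecreasing_cvgn_le R (series (fun k => lambda k ^+ 2)) _ cv2 N.
    apply.
    exact: (@nondecreasing_series R (fun k => lambda k ^+ 2) xpredT 0
              (fun k _ _ => sqr_ge0 (lambda k))).
  have hS N : \sum_(0 <= k < N.+1) lambda k * Phi k <=
      (etab / 2 * D 0%N + etab / 2 * L2) + c * \sum_(0 <= k < N.+1) lambda k.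
    have := tele N.+1; rewrite big_split /= -!mulr_sumr.
    have := dotv_ge0 (x N.+1 - xs); rewrite -/(D N.+1) => hDN.
    have := ler_wpM2l (ltW (lt_le_trans mu0 etab0)) (hL2 N.+1).
    have : 0 <= etab / 2 * D N.+1 by apply: mulr_ge0 => //; lra.
    have : etab * (\sum_(0 <= i < N.+1) lambda i ^+ 2) / 2 = etab / 2 * (\sum_(0 <= i < N.+1) lambda i ^+ 2) by ring.
    have : etab * L2 / 2 = etab / 2 * L2 by ring.
    lra.
  exact: (asympt lambda Phi _ c l0 ncv Phi0 c0 hS).
Qed.
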